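(* For fixed $\theta$, consider the function of $v\in\mathbb R^d$ \[ H(v,\theta)=\frac{\big\langle F(\Phi(\theta)+\sqrt\epsilon\,v),\ \Phi'(\theta)\big\rangle_\theta}{1-\sqrt\epsilon\langle v,\Phi''(\theta)\rangle_\theta-\sqrt\epsilon\big\langle v,\frac{d}{da}\big[P(a)^{-\top}P(a)^{-1}\big]\big|_{a=\theta}\Phi'(\theta)\big\rangle} \] (defined for $v$ near $0$). Then $H(0,\theta)=\omega_0$ and the derivative of $H$ with respect to $v$ at $v=0$ vanishes: $\frac{\partial H}{\partial v}(0,\theta)\cdot v=0$ for all $v\in\mathbb R^d$. Equivalently, for every fixed $v\in\mathbb R^d$, \[ \langle J(\theta)v,\Phi'(\theta)\rangle_\theta=-\omega_0\frac{d}{d\theta}\langle v,\Phi'(\theta)\rangle_\theta . \]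
   Context: Let $F:\mathbb R^d\to\mathbb R^d$ be $C^2$, and suppose $du/dt=F(u)$ has a periodic solution $u(t)=\Phi(\omega_0 t)$ with $\Phi$ $2\pi$-periodic and $\omega_0>0$ (so $F(\Phi(\theta))=\omega_0\Phi'(\theta)$); let $J(\theta)=DF(\Phi(\theta))$; $\epsilon>0$. Let $P(\theta)$ be a $2\pi$-periodic, $C^2$, everywhere invertible real matrix function whose first column is $\Phi'(\theta)$, and $\mathcal S=\mathrm{diag}(\nu_1,\dots,\nu_d)$ real diagonal with $\nu_1=0$, such that $\omega_0P'(\theta)=J(\theta)P(\theta)-P(\theta)\mathcal S$. Weighted inner product: $\langle x,y\rangle_\theta=\langle P(\theta)^{-1}x,P(\theta)^{-1}y\rangle$ with $\langle\cdot,\cdot\rangle$ the Euclidean inner product; $P^{-\top}$ denotes $(P^{-1})^\top$. *)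

(* Defs.v *)
From Stdlib Require Import Reals Lra.
Open Scope R_scope.

(* Vectors of R^d are represented as functions nat -> R; only the
   coordinates i < d are meaningful.  Matrices are nat -> nat -> R. *)
Definition vec := nat -> R.
Definition mat := nat -> nat -> R.

Fixpoint rsum (n : nat) (f : nat -> R) : R :=
  match n with
  | O => 0
  | S k => rsum k f + f k
  end.

Definition dot (d : nat) (x y : vec) : R := rsum d (fun i => x i * y i).
Definition vnorm (d : nat) (x : vec) : R := sqrt (dot d x x).

Definition vadd (x y : vec) : vec := fun i => x i + y i.
Definition vscal (c : R) (x : vec) : vec := fun i => c * x i.
Definition vzero : vec := fun _ => 0.

Definition mv (d : nat) (A : mat) (x : vec) : vec :=
  fun i => rsum d (fun j => A i j * x j).

Definition has_grad (d : nat) (g : vec -> R) (x : vec) (G : vec) : Prop :=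
  forall eps, 0 < eps -> exists delta, 0 < delta /\
    forall h, vnorm d h < delta ->
      Rabs (g (vadd x h) - g x - dot d G h) <= eps * vnorm d h.

Definition cont_at (d : nat) (g : vec -> R) (x : vec) : Prop :=
  forall eps, 0 < eps -> exists delta, 0 < delta /\
    forall y, vnorm d (vadd y (vscal (-1) x)) < delta -> Rabs (g y - g x) < eps.

Definition C2_with_jacobian (d : nat) (F : vec -> vec) (DF : vec -> mat) : Prop :=
  exists D2F : vec -> nat -> nat -> nat -> R,
    (forall x i, (i < d)%nat -> has_grad d (fun y => F y i) x (fun j => DF x i j)) /\
    (forall x i j, (i < d)%nat -> (j < d)%nat ->
        has_grad d (fun y => DF y i j) x (fun k => D2F x i j k)) /\
    (forall x i j k, (i < d)%nat -> (j < d)%nat -> (k < d)%nat ->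
        cont_at d (fun y => D2F y i j k) x).

(* weighted inner product <x,y>_theta = <P^{-1} x, P^{-1} y>, Pinv a = P(a)^{-1} *)
Definition ipw (d : nat) (Pinv : R -> mat) (a : R) (x y : vec) : R :=
  dot d (mv d (Pinv a) x) (mv d (Pinv a) y).

Definition Mw (d : nat) (Pinv : R -> mat) (a : R) : mat :=
  fun i j => rsum d (fun k => Pinv a k i * Pinv a k j).

(* the function H(v, theta) of the statement; dM is the derivative of
   a |-> P(a)^{-T}P(a)^{-1} at a = theta. *)
Definition Hfun (d : nat) (F : vec -> vec) (Phi dPhi ddPhi : R -> vec)
  (Pinv : R -> mat) (dM : mat) (eps theta : R) (v : vec) : R :=
  ipw d Pinv theta (F (vadd (Phi theta) (vscal (sqrt eps) v))) (dPhi theta)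
  / (1 - sqrt eps * ipw d Pinv theta v (ddPhi theta)
       - sqrt eps * dot d v (mv d dM (dPhi theta))).

(* Main.v *)
Require Import Defs.
From Stdlib Require Import Reals Lra Lia FunctionalExtensionality.
Open Scope R_scope.

Lemma rsum_ext n f g : (forall i, (i < n)%nat -> f i = g i) -> rsum n f = rsum n g.
Proof. induction n; simpl; intros H; [reflexivity|]. rewrite IHn by (intros; apply H; lia). rewrite H by lia. reflexivity. Qed.
Lemma rsum_plus n f g : rsum n (fun i => f i + g i) = rsum n f + rsum n g.
Proof. induction n; simpl; [lra|]. rewrite IHn; lra. Qed.
Lemma rsum_scal n c f : rsum n (fun i => c * f i) = c * rsum n f.
Proof. induction n; simpl; [lra|]. rewrite IHn; lra. Qed.
Lemma rsum_scal_r n c f : rsum n (fun i => f i * c) = rsum n f * c.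
Proof. induction n; simpl; [lra|]. rewrite IHn; lra. Qed.
Lemma rsum_zero n : rsum n (fun _ => 0) = 0.
Proof. induction n; simpl; [lra|]. rewrite IHn; lra. Qed.
Lemma rsum_opp n f : rsum n (fun i => - f i) = - rsum n f.
Proof. induction n; simpl; [lra|]. rewrite IHn; lra. Qed.
Lemma rsum_swap n m f : rsum n (fun i => rsum m (fun j => f i j)) = rsum m (fun j => rsum n (fun i => f i j)).
Proof. induction n; simpl. - symmetry; apply rsum_zero.
 - rewrite IHn. rewrite rsum_plus. reflexivity. Qed.
Lemma rsum_delta n k f : (k < n)%nat -> rsum n (fun i => f i * (if Nat.eqb i k then 1 else 0)) = f k.
Proof. induction n; intros Hk; [lia|]. simpl. destruct (Nat.eq_dec k n).
 - subst. rewrite Nat.eqb_refl. rewrite (rsum_ext _ _ (fun _ => 0)). rewrite rsum_zero; lra.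
   intros i Hi. replace (Nat.eqb i n) with false. lra. symmetry; apply Nat.eqb_neq; lia.
 - rewrite IHn by lia. replace (Nat.eqb n k) with false by (symmetry; apply Nat.eqb_neq; lia). lra.
Qed.
Lemma rsum_delta_l n k f : (k < n)%nat -> rsum n (fun i => (if Nat.eqb k i then 1 else 0) * f i) = f k.
Proof. intros Hk. rewrite <- (rsum_delta n k f Hk). apply rsum_ext. intros i _.
  rewrite Nat.eqb_sym. lra. Qed.
Lemma rsum_abs n f : Rabs (rsum n f) <= rsum n (fun i => Rabs (f i)).
Proof. induction n; simpl. rewrite Rabs_R0; lra.
  eapply Rle_trans. apply Rabs_triang. lra. Qed.
Lemma rsum_le n f g : (forall i, (i<n)%nat -> f i <= g i) -> rsum n f <= rsum n g.
Proof. induction n; simpl; intros H; [lra|]. assert (f n <= g n) by (apply H; lia).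
  assert (rsum n f <= rsum n g) by (apply IHn; intros; apply H; lia). lra. Qed.
Lemma rsum_nonneg n f : (forall i, (i<n)%nat -> 0 <= f i) -> 0 <= rsum n f.
Proof. intros H. rewrite <- (rsum_zero n). apply rsum_le. auto. Qed.
Lemma rsum_ge_term n f k : (forall i, (i<n)%nat -> 0 <= f i) -> (k < n)%nat -> f k <= rsum n f.
Proof. induction n; intros H Hk; [lia|]. simpl. destruct (Nat.eq_dec k n).
 - subst. assert (0 <= rsum n f) by (apply rsum_nonneg; intros; apply H; lia). lra.
 - assert (f k <= rsum n f) by (apply IHn; [intros; apply H; lia|lia]).
   assert (0 <= f n) by (apply H; lia). lra. Qed.

Lemma dext f g x l : (forall a, f a = g a) -> derivable_pt_lim f x l -> derivable_pt_lim g x l.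
Proof. intros H. replace g with f by (apply functional_extensionality; auto). auto. Qed.
Lemma dmult f g x l1 l2 : derivable_pt_lim f x l1 -> derivable_pt_lim g x l2 ->
  derivable_pt_lim (fun a => f a * g a) x (l1 * g x + f x * l2).
Proof. intros H1 H2. apply (derivable_pt_lim_mult f g x l1 l2 H1 H2). Qed.
Lemma dconst_r f c x l : derivable_pt_lim f x l -> derivable_pt_lim (fun a => f a * c) x (l * c).
Proof. intros H. replace (l*c) with (l * c + f x * 0) by ring.
  apply dmult; auto. apply derivable_pt_lim_const. Qed.
Lemma dconst_l f c x l : derivable_pt_lim f x l -> derivable_pt_lim (fun a => c * f a) x (c * l).
Proof. intros H. replace (c*l) with (0 * f x + c * l) by ring.
  apply (dmult (fun _ => c) f); auto. apply derivable_pt_lim_const. Qed.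
Lemma deriv_rsum n (g : R -> nat -> R) (l : nat -> R) x :
  (forall k, (k < n)%nat -> derivable_pt_lim (fun a => g a k) x (l k)) ->
  derivable_pt_lim (fun a => rsum n (g a)) x (rsum n l).
Proof. induction n; intros H; simpl. apply derivable_pt_lim_const.
  apply (derivable_pt_lim_plus (fun a => rsum n (g a)) (fun a => g a n)).
  apply IHn; intros; apply H; lia. apply H; lia. Qed.

Lemma dot_nonneg d h : 0 <= dot d h h.
Proof. unfold dot. apply rsum_nonneg. intros. nra. Qed.
Lemma coord_le d h i : (i < d)%nat -> Rabs (h i) <= vnorm d h.
Proof. intros Hi. unfold vnorm. rewrite <- sqrt_Rsqr_abs. apply sqrt_le_1_alt.
  unfold Rsqr. unfold dot. apply (rsum_ge_term d (fun i => h i * h i)); auto. intros; nra. Qed.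
Lemma vnorm_scal d c h : vnorm d (vscal c h) = Rabs c * vnorm d h.
Proof. unfold vnorm. replace (dot d (vscal c h) (vscal c h)) with ((c*c) * dot d h h).
  rewrite sqrt_mult_alt by nra. rewrite <- sqrt_Rsqr_abs. reflexivity.
  unfold dot, vscal. rewrite <- rsum_scal. apply rsum_ext; intros; ring. Qed.
Lemma dot_bound d G h : Rabs (dot d G h) <= rsum d (fun i => Rabs (G i)) * vnorm d h.
Proof. unfold dot. eapply Rle_trans. apply rsum_abs. rewrite <- rsum_scal_r.
  apply rsum_le. intros i Hi. rewrite Rabs_mult. apply Rmult_le_compat_l. apply Rabs_pos.
  apply coord_le; auto. Qed.
Lemma dot_comm d x y : dot d x y = dot d y x.
Proof. unfold dot. apply rsum_ext; intros; ring. Qed.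

Lemma fin_delta (n : nat) (Q : nat -> vec -> Prop) (nrm : vec -> R) :
 (forall i, (i<n)%nat -> exists del, 0 < del /\ forall h, nrm h < del -> Q i h) ->
 exists del, 0 < del /\ forall h, nrm h < del -> forall i, (i<n)%nat -> Q i h.
Proof. induction n; intros H.
 - exists 1; split; [lra|]. intros; lia.
 - destruct IHn as [d1 [Hd1 H1]]. intros; apply H; lia.
   destruct (H n) as [d2 [Hd2 H2]]. lia.
   exists (Rmin d1 d2); split. apply Rmin_pos; auto.
   intros h Hh i Hi. assert (Rmin d1 d2 <= d1) by apply Rmin_l. assert (Rmin d1 d2 <= d2) by apply Rmin_r.
   destruct (Nat.eq_dec i n). subst; apply H2; lra. apply H1; [lra|lia]. Qed.

Lemma ipw_Mw d Pinv a x y : ipw d Pinv a x y = rsum d (fun i => x i * rsum d (fun j => Mw d Pinv a i j * y j)).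
Proof. unfold ipw, dot, mv, Mw.
  transitivity (rsum d (fun k => rsum d (fun i => rsum d (fun j => x i * (Pinv a k i * Pinv a k j * y j))))).
  - apply rsum_ext; intros k _. rewrite <- rsum_scal_r. apply rsum_ext; intros i _.
    rewrite <- rsum_scal. apply rsum_ext; intros j _. ring.
  - rewrite rsum_swap. apply rsum_ext; intros i _. rewrite rsum_swap. rewrite <- rsum_scal.
    apply rsum_ext; intros j _. rewrite <- rsum_scal_r, <- rsum_scal. apply rsum_ext; intros; ring.
Qed.

Theorem mainTheorem4
  (d : nat) (Hd : (0 < d)%nat)
  (F : vec -> vec) (DF : vec -> mat) (HF : C2_with_jacobian d F DF)
  (omega0 : R) (Homega : 0 < omega0)
  (Phi dPhi ddPhi : R -> vec)
  (HPhi_per : forall a i, Phi (a + 2 * PI) i = Phi a i)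
  (HdPhi : forall a i, (i < d)%nat -> derivable_pt_lim (fun t => Phi t i) a (dPhi a i))
  (HddPhi : forall a i, (i < d)%nat -> derivable_pt_lim (fun t => dPhi t i) a (ddPhi a i))
  (Horbit : forall a i, (i < d)%nat -> F (Phi a) i = omega0 * dPhi a i)
  (eps : R) (Heps : 0 < eps)
  (P Pinv dP ddP : R -> mat) (nu : nat -> R)
  (HP_per : forall a i j, P (a + 2 * PI) i j = P a i j)
  (HdP : forall a i j, (i < d)%nat -> (j < d)%nat ->
           derivable_pt_lim (fun t => P t i j) a (dP a i j))
  (HddP : forall a i j, (i < d)%nat -> (j < d)%nat ->
           derivable_pt_lim (fun t => dP t i j) a (ddP a i j))
  (HddP_cont : forall i j, (i < d)%nat -> (j < d)%nat -> continuity (fun t => ddP t i j))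
  (HPinv_r : forall a i j, (i < d)%nat -> (j < d)%nat ->
           rsum d (fun k => P a i k * Pinv a k j) = if Nat.eqb i j then 1 else 0)
  (HPinv_l : forall a i j, (i < d)%nat -> (j < d)%nat ->
           rsum d (fun k => Pinv a i k * P a k j) = if Nat.eqb i j then 1 else 0)
  (Hcol1 : forall a i, (i < d)%nat -> P a i 0%nat = dPhi a i)
  (Hnu1 : nu 0%nat = 0)
  (HFloquet : forall a i j, (i < d)%nat -> (j < d)%nat ->
           omega0 * dP a i j = rsum d (fun k => DF (Phi a) i k * P a k j) - P a i j * nu j)
  (theta : R) (dM : mat)
  (HdM : forall i j, (i < d)%nat -> (j < d)%nat ->
           derivable_pt_lim (fun a => Mw d Pinv a i j) theta (dM i j)) :
  Hfun d F Phi dPhi ddPhi Pinv dM eps theta vzero = omega0 /\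
  has_grad d (Hfun d F Phi dPhi ddPhi Pinv dM eps theta) vzero vzero /\
  (forall v : vec,
     derivable_pt_lim (fun a => ipw d Pinv a v (dPhi a)) theta
       (- ipw d Pinv theta (mv d (DF (Phi theta)) v) (dPhi theta) / omega0)).
Proof.
  assert (Hd0 : (0 < d)%nat) by exact Hd.
  set (p := fun i => Pinv theta 0%nat i).
  set (J := DF (Phi theta)).
  assert (StepA : forall a k, (k < d)%nat -> mv d (Pinv a) (dPhi a) k = if Nat.eqb k 0 then 1 else 0).
  { intros a k Hk. unfold mv. rewrite (rsum_ext _ _ (fun j => Pinv a k j * P a j 0%nat)).
    apply HPinv_l; lia. intros; rewrite Hcol1; auto. }
  assert (StepB : forall a x, ipw d Pinv a x (dPhi a) = rsum d (fun j => Pinv a 0%nat j * x j)).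
  { intros a x. unfold ipw, dot.
    rewrite (rsum_ext _ _ (fun k => mv d (Pinv a) x k * (if Nat.eqb k 0 then 1 else 0))).
    rewrite rsum_delta by lia. reflexivity. intros; rewrite StepA; auto. }
  assert (StepD : forall a k i, (k<d)%nat -> (i<d)%nat -> Pinv a k i = rsum d (fun j => Mw d Pinv a i j * P a j k)).
  { intros a k i Hk Hi. unfold Mw.
    transitivity (rsum d (fun l => Pinv a l i * rsum d (fun j => Pinv a l j * P a j k))).
    - rewrite (rsum_ext _ _ (fun l => Pinv a l i * (if Nat.eqb l k then 1 else 0))).
      rewrite rsum_delta; auto. intros l Hl. rewrite HPinv_l; auto.
    - rewrite (rsum_ext d (fun j => rsum d (fun l => Pinv a l i * Pinv a l j) * P a j k)
               (fun j => rsum d (fun l => Pinv a l i * Pinv a l j * P a j k)))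
        by (intros; rewrite <- rsum_scal_r; reflexivity).
      rewrite (rsum_swap d d (fun j l => Pinv a l i * Pinv a l j * P a j k)).
      apply rsum_ext; intros l _. rewrite <- rsum_scal. apply rsum_ext; intros; ring. }
  set (D := fun i => rsum d (fun j => dM i j * P theta j 0%nat + Mw d Pinv theta i j * dP theta j 0%nat)).
  assert (StepE : forall i, (i<d)%nat -> derivable_pt_lim (fun a => Pinv a 0%nat i) theta (D i)).
  { intros i Hi. apply (dext (fun a => rsum d (fun j => Mw d Pinv a i j * P a j 0%nat))).
    intros; rewrite StepD; auto.
    apply (deriv_rsum d (fun a j => Mw d Pinv a i j * P a j 0%nat)). intros j Hj.
    apply dmult; auto. }
  assert (StepF : forall j, (j<d)%nat -> rsum d (fun k => D k * P theta k j + p k * dP theta k j) = 0).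
  { intros j Hj. apply (uniqueness_limite (fun a => rsum d (fun k => Pinv a 0%nat k * P a k j)) theta).
    apply (deriv_rsum d (fun a k => Pinv a 0%nat k * P a k j)). intros k Hk. apply dmult; auto.
    apply (dext (fun _ => if Nat.eqb 0 j then 1 else 0)). intros; rewrite HPinv_l; auto.
    apply derivable_pt_lim_const. }
  assert (Czero : forall c : nat -> R, (forall j, (j<d)%nat -> rsum d (fun k => c k * P theta k j) = 0) ->
                   forall i, (i<d)%nat -> c i = 0).
  { intros c Hc i Hi. rewrite <- (rsum_delta d i c Hi).
    rewrite (rsum_ext _ _ (fun k => rsum d (fun j => c k * P theta k j * Pinv theta j i))).
    rewrite rsum_swap. rewrite (rsum_ext _ _ (fun j => 0 * Pinv theta j i)).
    rewrite rsum_scal; ring.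
    intros j Hj. rewrite <- (Hc j Hj). rewrite <- rsum_scal_r; reflexivity.
    intros k Hk. rewrite <- (HPinv_r theta k i Hk Hi). rewrite <- rsum_scal. apply rsum_ext; intros; ring. }
  assert (StepG : forall i, (i<d)%nat -> omega0 * D i = - rsum d (fun k => p k * J k i)).
  { intros i Hi. enough (omega0 * D i + rsum d (fun k => p k * J k i) = 0) by lra.
    apply (Czero (fun i => omega0 * D i + rsum d (fun k => p k * J k i))); auto.
    intros j Hj.
    rewrite (rsum_ext _ _ (fun k => omega0 * (D k * P theta k j + p k * dP theta k j)
       - p k * (omega0 * dP theta k j) + rsum d (fun l => p l * J l k * P theta k j))).
    2:{ intros k Hk. rewrite rsum_scal_r. ring. }
    rewrite rsum_plus.
    rewrite (rsum_ext _ _ (fun k => omega0 * (D k * P theta k j + p k * dP theta k j) + - (p k * (omega0 * dP theta k j)))) by (intros; ring).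
    rewrite rsum_plus, rsum_scal, rsum_opp, StepF by auto.
    rewrite (rsum_ext _ _ (fun k => rsum d (fun l => p k * (J k l * P theta l j)) - nu j * (p k * P theta k j))).
    2:{ intros k Hk. rewrite HFloquet by auto. rewrite rsum_scal. unfold J. ring. }
    rewrite (rsum_ext _ _ (fun k => rsum d (fun l => p k * (J k l * P theta l j)) + - nu j * (p k * P theta k j))) by (intros; ring).
    rewrite rsum_plus, rsum_scal.
    replace (rsum d (fun i0 => p i0 * P theta i0 j)) with (if Nat.eqb 0 j then 1 else 0) by (symmetry; apply HPinv_l; lia).
    rewrite (rsum_swap d d (fun k l => p l * J l k * P theta k j)).
    rewrite (rsum_ext d (fun l => rsum d (fun k => p l * J l k * P theta k j))
               (fun l => rsum d (fun k => p l * (J l k * P theta k j)))) by (intros; apply rsum_ext; intros; ring).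
    destruct (Nat.eqb 0 j) eqn:E; [apply Nat.eqb_eq in E; subst; rewrite Hnu1|]; ring. }
  assert (StepH : forall v, derivable_pt_lim (fun a => ipw d Pinv a v (dPhi a)) theta
                 (- ipw d Pinv theta (mv d J v) (dPhi theta) / omega0)).
  { intros v.
    assert (E : rsum d (fun j => D j * v j) = - ipw d Pinv theta (mv d J v) (dPhi theta) / omega0).
    { rewrite StepB. apply (Rmult_eq_reg_l omega0); [|lra].
      transitivity (- rsum d (fun i => p i * mv d J v i)).
      - rewrite <- rsum_scal.
        rewrite (rsum_ext _ _ (fun j => - rsum d (fun k => p k * J k j * v j))).
        2:{ intros j Hj. rewrite rsum_scal_r.
            replace (omega0 * (D j * v j)) with ((omega0 * D j) * v j) by ring.
            rewrite StepG by auto. ring. }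
        rewrite rsum_opp. f_equal. rewrite rsum_swap. apply rsum_ext; intros i _.
        unfold mv. rewrite <- rsum_scal. apply rsum_ext; intros; ring.
      - unfold p. field. lra. }
    rewrite <- E.
    apply (dext (fun a => rsum d (fun j => Pinv a 0%nat j * v j))). intros; symmetry; apply StepB.
    apply (deriv_rsum d (fun a j => Pinv a 0%nat j * v j)). intros; apply dconst_r; auto. }
  assert (StepI : forall h, rsum d (fun i => p i * mv d J h i) =
      - omega0 * (ipw d Pinv theta h (ddPhi theta) + dot d h (mv d dM (dPhi theta)))).
  { intros h.
    assert (Hl : derivable_pt_lim (fun a => ipw d Pinv a h (dPhi a)) theta
                  (ipw d Pinv theta h (ddPhi theta) + dot d h (mv d dM (dPhi theta)))).
    { apply (dext (fun a => rsum d (fun i => h i * rsum d (fun j => Mw d Pinv a i j * dPhi a j)))).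
      intros; symmetry; apply ipw_Mw.
      replace (ipw d Pinv theta h (ddPhi theta) + dot d h (mv d dM (dPhi theta))) with
        (rsum d (fun i => h i * rsum d (fun j => dM i j * dPhi theta j + Mw d Pinv theta i j * ddPhi theta j))).
      apply (deriv_rsum d (fun a i => h i * rsum d (fun j => Mw d Pinv a i j * dPhi a j))).
      intros i Hi. apply dconst_l. apply (deriv_rsum d (fun a j => Mw d Pinv a i j * dPhi a j)).
      intros j Hj. apply dmult; auto.
      rewrite ipw_Mw. unfold dot, mv. rewrite <- rsum_plus. apply rsum_ext; intros i _.
      rewrite rsum_plus; ring. }
    pose proof (uniqueness_limite _ _ _ _ Hl (StepH h)) as U. rewrite StepB in U. rewrite U.
    unfold p. field. lra. }
  assert (Hsum1 : rsum d (fun j => Pinv theta 0%nat j * dPhi theta j) = 1).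
  { pose proof (StepA theta 0%nat Hd) as A. unfold mv in A. rewrite A. reflexivity. }
  assert (Ipw0 : forall y, ipw d Pinv theta vzero y = 0).
  { intros y. rewrite ipw_Mw. unfold vzero. transitivity (rsum d (fun _ : nat => 0)); [apply rsum_ext; intros; ring | apply rsum_zero]. }
  assert (Dot0 : forall y, dot d vzero y = 0).
  { intros y. unfold dot, vzero. transitivity (rsum d (fun _ : nat => 0)); [apply rsum_ext; intros; ring | apply rsum_zero]. }
  assert (Part1 : Hfun d F Phi dPhi ddPhi Pinv dM eps theta vzero = omega0).
  { unfold Hfun. replace (vadd (Phi theta) (vscal (sqrt eps) vzero)) with (Phi theta)
      by (apply functional_extensionality; intros; unfold vadd, vscal, vzero; ring).
    rewrite StepB, Ipw0, Dot0.
    rewrite (rsum_ext _ _ (fun j => omega0 * (Pinv theta 0%nat j * dPhi theta j)))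
      by (intros; rewrite Horbit; auto; ring).
    rewrite rsum_scal, Hsum1. field. }
  split; [exact Part1|]. split; [|exact StepH].
  destruct HF as [D2F [HF1 _]].
  assert (Hs : 0 < sqrt eps) by (apply sqrt_lt_R0; lra).
  set (s := sqrt eps) in *.
  set (A := rsum d (fun i => Rabs (p i))).
  assert (HA : 0 <= A) by (apply rsum_nonneg; intros; apply Rabs_pos).
  set (W := fun i => rsum d (fun j => Mw d Pinv theta i j * ddPhi theta j) + mv d dM (dPhi theta) i).
  set (C := rsum d (fun i => Rabs (W i))).
  assert (HC : 0 <= C) by (apply rsum_nonneg; intros; apply Rabs_pos).
  assert (LB : forall h, Rabs (ipw d Pinv theta h (ddPhi theta) + dot d h (mv d dM (dPhi theta))) <= C * vnorm d h).
  { intros h. replace (ipw d Pinv theta h (ddPhi theta) + dot d h (mv d dM (dPhi theta))) with (dot d W h).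
    apply dot_bound. rewrite ipw_Mw. unfold dot. rewrite <- rsum_plus. apply rsum_ext; intros; unfold W; ring. }
  intros e He.
  set (e' := e / (2 * s * (A + 1))).
  assert (He' : 0 < e') by (unfold e'; apply Rdiv_lt_0_compat; [lra| nra]).
  destruct (fin_delta d (fun i h => Rabs ((fun y => F y i) (vadd (Phi theta) h) - (fun y => F y i) (Phi theta)
        - dot d (fun j => J i j) h) <= e' * vnorm d h) (vnorm d)) as [d0 [Hdd0 Hdel0]].
  { intros i Hi. apply (HF1 (Phi theta) i Hi e' He'). }
  exists (Rmin (d0 / s) (1 / (2 * s * (C + 1)))). split.
  { apply Rmin_pos; apply Rdiv_lt_0_compat; nra. }
  intros h Hh.
  assert (Hh1 : vnorm d h < d0 / s) by (eapply Rlt_le_trans; [exact Hh| apply Rmin_l]).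
  assert (Hh2 : vnorm d h < 1 / (2 * s * (C + 1))) by (eapply Rlt_le_trans; [exact Hh| apply Rmin_r]).
  assert (Hnh : 0 <= vnorm d h) by (unfold vnorm; apply sqrt_pos).
  replace (vadd vzero h) with h by (apply functional_extensionality; intros; unfold vadd, vzero; ring).
  rewrite Part1, Dot0.
  set (Lh := ipw d Pinv theta h (ddPhi theta) + dot d h (mv d dM (dPhi theta))).
  set (k := vscal s h).
  assert (Hk : vnorm d k = s * vnorm d h) by (unfold k; rewrite vnorm_scal, Rabs_pos_eq; lra).
  assert (Hk0 : vnorm d k < d0).
  { rewrite Hk. apply (Rmult_lt_compat_l s) in Hh1; auto. replace (s * (d0 / s)) with d0 in Hh1 by (field; lra). lra. }
  set (r := fun i => F (vadd (Phi theta) k) i - F (Phi theta) i - dot d (fun j => J i j) k).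
  set (Rh := rsum d (fun i => p i * r i)).
  assert (HR : Rabs Rh <= A * (e' * (s * vnorm d h))).
  { unfold Rh. eapply Rle_trans. apply rsum_abs. unfold A. rewrite <- rsum_scal_r.
    apply rsum_le. intros i Hi. rewrite Rabs_mult. apply Rmult_le_compat_l. apply Rabs_pos.
    rewrite <- Hk. apply (Hdel0 k Hk0 i Hi). }
  assert (HN : ipw d Pinv theta (F (vadd (Phi theta) k)) (dPhi theta) = omega0 - s * omega0 * Lh + Rh).
  { rewrite StepB.
    rewrite (rsum_ext _ _ (fun i => omega0 * (Pinv theta 0%nat i * dPhi theta i) + (s * (p i * mv d J h i) + p i * r i))).
    2:{ intros i Hi. unfold r. rewrite Horbit by auto.
        replace (dot d (fun j => J i j) k) with (s * mv d J h i).
        unfold p; ring. unfold dot, k, mv, vscal. rewrite <- rsum_scal. apply rsum_ext; intros; ring. }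
    rewrite rsum_plus, rsum_scal, Hsum1, rsum_plus, rsum_scal, StepI. fold Rh. unfold Lh. ring. }
  assert (HL : Rabs Lh <= C * vnorm d h) by apply LB.
  assert (HsL : s * Rabs Lh < 1/2).
  { assert (C * vnorm d h <= (C + 1) * vnorm d h) by nra.
    assert ((C+1) * vnorm d h < (C + 1) * (1 / (2 * s * (C + 1)))) by (apply Rmult_lt_compat_l; lra).
    replace ((C + 1) * (1 / (2 * s * (C + 1)))) with (/ (2 * s)) in H0 by (field; lra).
    assert (Rabs Lh < / (2*s)) by lra.
    apply (Rmult_lt_compat_l s) in H1; auto. replace (s * / (2 * s)) with (1/2) in H1 by (field; lra). lra. }
  assert (HDn : 1/2 < 1 - s * Lh).
  { pose proof (Rle_abs Lh). nra. }
  unfold Hfun. change (sqrt eps) with s. change (vscal s h) with k. rewrite HN.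
  replace (1 - s * ipw d Pinv theta h (ddPhi theta) - s * dot d h (mv d dM (dPhi theta))) with (1 - s * Lh) by (unfold Lh; ring).
  replace ((omega0 - s * omega0 * Lh + Rh) / (1 - s * Lh) - omega0 - 0) with (Rh * / (1 - s * Lh)) by (field; lra).
  rewrite Rabs_mult, Rabs_inv, (Rabs_pos_eq (1 - s * Lh)) by lra.
  assert (Hinv : / (1 - s * Lh) <= 2).
  { replace 2 with (/ (1/2)) by field. apply Rinv_le_contravar; lra. }
  assert (He2 : 2 * s * e' * (A + 1) = e) by (unfold e'; field; nra).
  assert (0 <= / (1 - s * Lh)) by (left; apply Rinv_0_lt_compat; lra).
  assert (Rabs Rh * / (1 - s * Lh) <= Rabs Rh * 2) by (apply Rmult_le_compat_l; [apply Rabs_pos|lra]).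
  assert (A * (e' * (s * vnorm d h)) * 2 <= e * vnorm d h).
  { rewrite <- He2. assert (0 <= s * e' * vnorm d h) by (apply Rmult_le_pos; nra). nra. }
  pose proof (Rabs_pos Rh). nra.
Qed.
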